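(* Let $\rho$ be a quantum state on the $L$-qubit Hilbert space $\mathcal{H}_L$ and let $\Psi,\Phi$ be two pure states on $\mathcal{H}_L\otimes\mathcal{H}_M$ ($\mathcal{H}_M$ an $M$-qubit space), both purifications of $\rho$ (i.e. $\operatorname{Tr}_{\mathcal{H}_M}\Psi=\operatorname{Tr}_{\mathcal{H}_M}\Phi=\rho$) and both of definite parity. Then there exists a unitary channel $\mathcal{U}$ on $\mathcal{H}_M$ that maps states of definite parity into states of definite parity and satisfies $(\mathcal{I}\otimes\mathcal{U})(\Psi)=\Phi$.
   Context: For $n$ qubits, the computational basis vectors $|s_1,\dots,s_n\rangle$, $s_i\in\{0,1\}$, have parity $p=\bigoplus_i s_i$; $\mathcal{H}_n=\mathcal{H}_n^0\oplus\mathcal{H}_n^1$ where $\mathcal{H}_n^p$ is spanned by basis vectors of parity $p$ (for $\mathcal{H}_L\otimes\mathcal{H}_M$, parity is computed over all $L+M$ qubits). A state $\rho$ has definite parity if $\rho=\rho_0+\rho_1$ with $\rho_p$ supported on $\mathcal{H}_n^p$; in particular a pure state has definite parity $p$ if its vector lies in $\mathcal{H}_n^p$. *)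

(* Defs.v *)
From HB Require Import structures.
From mathcomp Require Import all_boot all_order all_algebra.
From mathcomp Require Export spectral.
Set Implicit Arguments. Unset Strict Implicit. Unset Printing Implicit Defensive.
Import Order.TTheory GRing.Theory Num.Theory.
Local Open Scope ring_scope.
Local Open Scope sesquilinear_scope.

Section QDefs.
Variable C : numClosedFieldType.

(* Parity of the computational basis vector |s_1,...,s_n> with index i : 'I_(2^n),
   the bits s_b being the binary digits of i. *)
Definition qparity (n : nat) (i : 'I_(2 ^ n)) : bool :=
  odd (\sum_(b < n) (odd (i %/ 2 ^ b) : nat)).

(* Basis of H_L (x) H_M: index k : 'I_(2^L * 2^M) corresponds (via mathcomp's
   mxvec_index bijection) to a pair (i, j) of basis indices of H_L and H_M. *)
Definition unpair (m n : nat) (k : 'I_(m * n)) : 'I_m * 'I_n :=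
  enum_val (cast_ord (esym (mxvec_cast m n)) k).

Definition cparity (L M : nat) (k : 'I_(2 ^ L * 2 ^ M)) : bool :=
  qparity (unpair k).1 (+) qparity (unpair k).2.

Definition kron (m n : nat) (A : 'M[C]_m) (B : 'M[C]_n) : 'M[C]_(m * n) :=
  \matrix_(k, l) (A (unpair k).1 (unpair l).1 * B (unpair k).2 (unpair l).2).

Definition ptrace2 (m n : nat) (X : 'M[C]_(m * n)) : 'M[C]_m :=
  \matrix_(i, i') \sum_(j < n) X (mxvec_index i j) (mxvec_index i' j).

Definition psdmx (N : nat) (A : 'M[C]_N) : Prop :=
  forall v : 'rV[C]_N, 0 <= (v *m A *m v ^t*) 0 0.

Definition is_state (N : nat) (rho : 'M[C]_N) : Prop :=
  psdmx rho /\ \tr rho = 1.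

Definition is_pure_state (N : nat) (X : 'M[C]_N) : Prop :=
  exists psi : 'cV[C]_N, psi ^t* *m psi = 1%:M /\ X = psi *m psi ^t*.

Definition definite_parity (N : nat) (par : 'I_N -> bool) (rho : 'M[C]_N) : Prop :=
  exists rho0 rho1 : 'M[C]_N, rho = rho0 + rho1 /\
    forall (p : bool) (i j : 'I_N),
      (if p then rho1 else rho0) i j != 0 -> par i = p /\ par j = p.

Definition uchan (N : nat) (U : 'M[C]_N) (X : 'M[C]_N) : 'M[C]_N :=
  U *m X *m U ^t*.

End QDefs.

(* Main.v *)
Require Import Defs.
From mathcomp Require Import all_boot all_order all_algebra.
From mathcomp Require Import spectral zify.
Set Implicit Arguments. Unset Strict Implicit. Unset Printing Implicit Defensive.
Import Order.TTheory GRing.Theory Num.Theory.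
Local Open Scope ring_scope.
Local Open Scope sesquilinear_scope.

Section KL.
Variable C : numClosedFieldType.

Lemma tcM m n p (A : 'M[C]_(m,n)) (B : 'M[C]_(n,p)) : (A *m B)^t* = B^t* *m A^t*.
Proof. by rewrite trmx_mul map_mxM. Qed.

Lemma gram0 m n (K : 'M[C]_(m,n)) : K *m K^t* = 0 -> K = 0.
Proof.
move=> /matrixP H; apply/matrixP => i j; rewrite mxE.
have := H i i; rewrite !mxE.
under eq_bigr do rewrite !mxE.
move=> /psumr_eq0P => /(_ (fun k _ => mul_conjC_ge0 _) j isT) /eqP.
by rewrite mul_conjC_eq0 => /eqP.
Qed.

Lemma unitary_tcK n (U : 'M[C]_n) : U \is unitarymx -> U^t* *m U = 1%:M.
Proof. by rewrite -trmxC_unitary => /unitarymxP; rewrite trmxCK. Qed.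

Lemma col_gram m1 m2 m3 m4 n (A : 'M[C]_(m1,n)) (B : 'M[C]_(m2,n))
   (D : 'M[C]_(m3,n)) (E : 'M[C]_(m4,n)) :
  col_mx A B *m (col_mx D E)^t* =
  block_mx (A *m D^t*) (A *m E^t*) (B *m D^t*) (B *m E^t*).
Proof. by rewrite tr_col_mx map_row_mx mul_col_row. Qed.

Lemma row_gram m n1 n2 (A : 'M[C]_(m,n1)) (B : 'M[C]_(m,n2))
   p (D : 'M[C]_(p,n1)) (E : 'M[C]_(p,n2)) :
  row_mx A B *m (row_mx D E)^t* = A *m D^t* + B *m E^t*.
Proof. by rewrite tr_row_mx map_col_mx mul_row_col. Qed.

Lemma row0_1 n : row 0 (1%:M : 'M[C]_(1 + n)) = row_mx 1%:M 0.
Proof.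
apply/rowP => j; rewrite !mxE; case: splitP => [j' Hj|k Hk].
  by rewrite mxE -val_eqE /= Hj (ord1 j').
by rewrite -val_eqE /= Hk mxE.
Qed.

Lemma ext_row n (x : 'rV[C]_(1 + n)) : exists (H : 'M[C]_(1 + n)) (a : C),
  [/\ H \is unitarymx, 0 <= a & x *m H^t* = row_mx a%:M 0].
Proof.
pose A : 'M[C]_(1 + n, 1 + n) := col_mx x 0.
pose H := schmidt A.
have Hu : H \is unitarymx by apply: schmidt_unitarymx.
have r0A : row 0 A = x.
  apply/rowP => j; rewrite !mxE; case: splitP => [i' Hi|k /= Hk].
    by rewrite (ord1 i').
  by [].
have := row_schmidt_sub A 0.
rewrite (bigD1 0) //= big1 ?addsmx0; last first.
  by move=> k /andP[]; rewrite leqn0 => /eqP k0; rewrite -val_eqE /= k0.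
rewrite genmxE r0A => /submxP [D xE].
rewrite [D]mx11_scalar mul_scalar_mx in xE.
have s1 : (row 0 H *m (row 0 H)^t*) 0 0 = 1.
  transitivity ((H *m H^t*) 0 0); last by rewrite (unitarymxP Hu) mxE eqxx.
  by rewrite !mxE; apply: eq_bigr => k _; rewrite !mxE.
exists H, (D 0 0); split => //.
  have := form1_row_schmidt A 0.
  by rewrite dotmxE r0A xE -scalemxAl mxE s1 mulr1.
by rewrite xE -scalemxAl -row_mul (unitarymxP Hu) row0_1 scale_row_mx scaler0 scale_scalar_mx mulr1.
Qed.


Lemma unitary1 n : (1%:M : 'M[C]_n) \is unitarymx.
Proof. by apply/unitarymxP; rewrite trmx1 map_mx1 mulmx1. Qed.

Lemma rot_gram m1 m2 n (A : 'M[C]_(m1,n)) (B : 'M[C]_(m2,n)) (U : 'M[C]_n) :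
  U \is unitarymx -> (A *m U^t*) *m (B *m U^t*)^t* = A *m B^t*.
Proof.
by move=> Uu; rewrite tcM trmxCK mulmxA -(mulmxA A) unitary_tcK // mulmx1.
Qed.

Lemma blk_unitary n (V : 'M[C]_n) : V \is unitarymx ->
  block_mx (1%:M : 'M_1) 0 0 V \is unitarymx.
Proof.
move=> Vu; apply/unitarymxP; rewrite tr_block_mx map_block_mx mulmx_block.
rewrite !trmx0 !map_mx0 trmx1 map_mx1 !mulmx0 !mul0mx mulmx1 !addr0 !add0r.
by rewrite (unitarymxP Vu) -scalar_mx_block.
Qed.

Lemma rowa_gram n (a : C) : row_mx a%:M (0 : 'M[C]_(1,n)) *m (row_mx a%:M 0)^t* = (a * a^*)%:M.
Proof.
rewrite row_gram mul0mx addr0 tr_scalar_mx map_scalar_mx.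
by rewrite mul_mx_scalar scale_scalar_mx mulrC.
Qed.

Lemma rowa_gram2 r n (a : C) (c : 'M[C]_(r,1)) (D : 'M[C]_(r,n)) :
  row_mx c D *m (row_mx a%:M (0 : 'M[C]_(1,n)))^t* = a^* *: c.
Proof.
by rewrite row_gram !trmx0 !map_mx0 mulmx0 addr0 tr_scalar_mx map_scalar_mx mul_mx_scalar.
Qed.

Lemma KL r e (X Y : 'M[C]_(r, e)) : X *m X^t* = Y *m Y^t* ->
  exists W : 'M[C]_e, W \is unitarymx /\ X *m W = Y.
Proof.
elim: r e X Y => [|r IH] e X Y G.
  by exists 1%:M; split; [exact: unitary1 | rewrite !flatmx0].
case: e X Y G => [|n] X Y G.
  by exists 1%:M; split; [exact: unitary1 | rewrite !thinmx0].
move: X Y G; rewrite -[n.+1]/(1 + n)%N -[r.+1]/(1 + r)%N => X Y G.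
have [x [X' eX]] : exists x X', X = col_mx x X' :> 'M_(1 + r, 1 + n).
  by exists (usubmx (X : 'M_(1 + r, 1 + n))), (dsubmx (X : 'M_(1 + r, 1 + n))); rewrite vsubmxK.
have [y [Y' eY]] : exists y Y', Y = col_mx y Y' :> 'M_(1 + r, 1 + n).
  by exists (usubmx (Y : 'M_(1 + r, 1 + n))), (dsubmx (Y : 'M_(1 + r, 1 + n))); rewrite vsubmxK.
have G0 := G; rewrite eX eY !col_gram in G0.
case/eq_block_mx: G0 => _ _ _ G0.
have [Hx [a [Hxu a0 xH]]] := ext_row x.
have [Hy [b [Hyu b0 yH]]] := ext_row y.
pose Z := X' *m Hx^t* : 'M_(r, 1 + n).
pose Z' := Y' *m Hy^t* : 'M_(r, 1 + n).
have eX1 : X *m Hx^t* = col_mx (row_mx a%:M 0) (row_mx (lsubmx Z) (rsubmx Z)).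
  by rewrite eX mul_col_mx xH hsubmxK.
have eY1 : Y *m Hy^t* = col_mx (row_mx b%:M 0) (row_mx (lsubmx Z') (rsubmx Z')).
  by rewrite eY mul_col_mx yH hsubmxK.
have G1 : (X *m Hx^t*) *m (X *m Hx^t*)^t* = (Y *m Hy^t*) *m (Y *m Hy^t*)^t*.
  by rewrite !rot_gram.
rewrite eX1 eY1 !col_gram !rowa_gram !rowa_gram2 !row_gram in G1.
case/eq_block_mx: G1 => G11 _ G21 G22.
have ab : a = b.
  move/matrixP: G11 => /(_ 0 0); rewrite !mxE eqxx /= !mulr1n !geC0_conj // => /eqP.
  by rewrite -!expr2 eqrXn2 // => /eqP.
subst b.
have [a0'|an0] := eqVneq a 0.
  have x0 : x = 0.
    by rewrite -(mulmxKtV x Hxu) // xH a0' (raddf0 (@scalar_mx C 1)) row_mx0 mul0mx.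
  have y0 : y = 0.
    by rewrite -(mulmxKtV y Hyu) // yH a0' (raddf0 (@scalar_mx C 1)) row_mx0 mul0mx.
  have [W [Wu XW]] := IH _ _ _ G0.
  exists W; split => //.
  by rewrite eX eY mul_col_mx XW x0 y0 mul0mx.
have cd : lsubmx Z = lsubmx Z'.
  by apply: (scalerI _ G21); rewrite conjC_eq0.
rewrite cd in G22; move/addrI: G22 => G22.
have [V [Vu XV]] := IH _ _ _ G22.
exists (Hx^t* *m block_mx 1%:M 0 0 V *m Hy); split.
  by rewrite !mul_unitarymx ?trmxC_unitary ?blk_unitary.
rewrite !mulmxA eX1 -(mulmxKtV Y Hyu) // eY1; congr (_ *m _).
rewrite mul_col_mx !mul_row_block !mulmx0 !mul0mx !mulmx1 !addr0 !add0r.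
by rewrite cd XV.
Qed.


Lemma sum_delta n (a : 'I_n) (F : 'I_n -> C) : \sum_j (a == j)%:R * F j = F a.
Proof.
rewrite (bigD1 a) //= eqxx mul1r big1 ?addr0 // => j /negbTE.
by rewrite eq_sym => ->; rewrite mul0r.
Qed.

Definition sel n (A : {set 'I_n}) : 'M[C]_(#|A|, n) :=
  \matrix_(t, j) ((enum_val t == j)%:R).

Lemma sel_tcE n (A : {set 'I_n}) j t : (sel A)^t* j t = (enum_val t == j)%:R.
Proof. by rewrite !mxE rmorph_nat. Qed.

Lemma sel_unitary n (A : {set 'I_n}) : sel A \is unitarymx.
Proof.
apply/unitarymxP/matrixP => t t'; rewrite !mxE.
under eq_bigr do rewrite sel_tcE mxE.
by rewrite sum_delta (inj_eq enum_val_inj) eq_sym.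
Qed.

Lemma sel_cross n (A : {set 'I_n}) : sel A *m (sel (~: A))^t* = 0.
Proof.
apply/matrixP => t t'; rewrite !mxE.
under eq_bigr do rewrite sel_tcE mxE.
rewrite sum_delta.
have := enum_valP t; have := enum_valP t'; rewrite inE.
by case: eqP => // ->; move=> /negbTE ->.
Qed.

Lemma selP n (A : {set 'I_n}) :
  (sel A)^t* *m sel A = \matrix_(i, j) ((i == j) && (i \in A))%:R.
Proof.
apply/matrixP => i j; rewrite !mxE.
under eq_bigr do rewrite sel_tcE mxE.
rewrite -(big_enum_val (fun x => (x == i)%:R * (x == j)%:R :> C)) /=.
rewrite big_mkcond /= (bigD1 i) //= big1 ?addr0.
  by rewrite eqxx mul1r; case: (i \in A); rewrite ?andbT ?andbF.
by move=> k /negbTE ->; rewrite mul0r if_same.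
Qed.

Lemma sel_sum n (A : {set 'I_n}) :
  (sel A)^t* *m sel A + (sel (~: A))^t* *m sel (~: A) = 1%:M.
Proof.
rewrite !selP; apply/matrixP => i j; rewrite !mxE inE.
by case: (i \in A); case: (i == j); rewrite /= ?addr0 ?add0r.
Qed.

Lemma sel_zero n (A : {set 'I_n}) (M : 'M[C]_#|A|) i j :
  ((sel A)^t* *m M *m sel A) i j != 0 -> (i \in A) && (j \in A).
Proof.
apply: contraR => /nandP H; rewrite !mxE; apply/eqP/big1 => k _.
case: H => H.
  rewrite mxE big1 ?mul0r // => t _; rewrite sel_tcE.
  have := enum_valP t; case: (enum_val t =P i) => [->|_ _]; first by rewrite (negbTE H).
  by rewrite mul0r.
rewrite mxE [sel A k j]mxE; have := enum_valP k.
by case: (enum_val k =P j) => [->|_ _]; [rewrite (negbTE H)|rewrite mulr0].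
Qed.

Lemma KLS n (A : {set 'I_n}) r (X Y : 'M[C]_(r,n)) :
  (X *m (sel A)^t*) *m (X *m (sel A)^t*)^t* = (Y *m (sel A)^t*) *m (Y *m (sel A)^t*)^t* ->
  (X *m (sel (~: A))^t*) *m (X *m (sel (~: A))^t*)^t* =
    (Y *m (sel (~: A))^t*) *m (Y *m (sel (~: A))^t*)^t* ->
  exists W : 'M[C]_n, [/\ W \is unitarymx, X *m W = Y &
     forall i j, W i j != 0 -> (i \in A) = (j \in A)].
Proof.
move=> G0 G1.
have [W0 [W0u XW0]] := KL G0.
have [W1 [W1u XW1]] := KL G1.
have S0u := sel_unitary A; have S1u := sel_unitary (~: A).
have c01 := sel_cross A.
have c10 : sel (~: A) *m (sel A)^t* = 0.
  by rewrite -[sel (~: A) *m _]trmxCK tcM trmxCK c01 trmx0 map_mx0.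
exists ((sel A)^t* *m W0 *m sel A + (sel (~: A))^t* *m W1 *m sel (~: A)); split.
- apply/unitarymxP; rewrite raddfD /= raddfD /= !tcM !trmxCK.
  rewrite mulmxDl !mulmxDr !mulmxA !mulmxtVK //.
  rewrite -!(mulmxA _ (sel A)) -!(mulmxA _ (sel (~: A))) c01 c10 !mulmx0 !mul0mx addr0 add0r.
  exact: sel_sum.
- rewrite mulmxDr !mulmxA XW0 XW1 -!(mulmxA Y) -mulmxDr sel_sum mulmx1 //.
move=> i j; rewrite mxE.
have [h0|/sel_zero /andP[-> ->] //] := eqVneq (((sel A)^t* *m W0 *m sel A) i j) 0.
by rewrite h0 add0r => /sel_zero; rewrite !inE => /andP[/negbTE -> /negbTE ->].
Qed.

End KL.

Section Main.
Variable C : numClosedFieldType.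

Lemma dpP (N : nat) (par : 'I_N -> bool) (X : 'M[C]_N) :
  definite_parity par X <-> (forall i j, X i j != 0 -> par i = par j).
Proof.
split.
  move=> [r0 [r1 [-> H]]] i j; rewrite mxE.
  have [h0|/(H false)[-> ->] //] := eqVneq (r0 i j) 0.
  by rewrite h0 add0r => /(H true) [-> ->].
move=> H.
exists (\matrix_(i, j) if par i then 0 else X i j), (\matrix_(i, j) if par i then X i j else 0).
split.
  by apply/matrixP => i j; rewrite !mxE; case: (par i); rewrite ?addr0 ?add0r.
move=> p i j; case: p; rewrite mxE; case: ifP => pi; rewrite ?eqxx // => nz; by rewrite -(H _ _ nz) pi.
Qed.

Lemma unpairK m n (i : 'I_m) (j : 'I_n) : unpair (mxvec_index i j) = (i, j).
Proof. by rewrite /unpair /mxvec_index cast_ordK enum_rankK. Qed.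

Lemma unpairK2 m n (k : 'I_(m * n)) : mxvec_index (unpair k).1 (unpair k).2 = k.
Proof. by case/mxvec_indexP: k => i j; rewrite unpairK. Qed.

Definition vmx m n (v : 'cV[C]_(m * n)) : 'M[C]_(m, n) :=
  \matrix_(i, j) v (mxvec_index i j) 0.

Lemma ptrace_pure m n (v : 'cV[C]_(m * n)) :
  ptrace2 (v *m v^t*) = vmx v *m (vmx v)^t*.
Proof.
apply/matrixP => i i'; rewrite !mxE; apply: eq_bigr => j _.
by rewrite !mxE big_ord1 !mxE.
Qed.

Lemma pure_par N (par : 'I_N -> bool) (v : 'cV[C]_N) :
  v^t* *m v = 1%:M -> definite_parity par (v *m v^t*) ->
  exists p, forall k, v k 0 != 0 -> par k = p.
Proof.
move=> vn /dpP H.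
have [/existsP [k0 k0nz]|] := boolP [exists k, v k 0 != 0].
  exists (par k0) => k knz; apply: H.
  by rewrite !mxE big_ord1 !mxE mulf_neq0 // conjC_eq0.
rewrite negb_exists => /forallP v0.
have : v = 0 by apply/matrixP => k t; rewrite ord1 mxE; have := v0 k; rewrite negbK => /eqP.
move=> v00; move: vn; rewrite v00 mulmx0 => /matrixP /(_ 0 0); rewrite !mxE eqxx /=.
by move/eqP; rewrite eq_sym oner_eq0.
Qed.

Lemma kron_apply m n (U : 'M[C]_n) (v : 'cV[C]_(m * n)) k :
  (kron 1%:M U *m v) k 0 = \sum_j U (unpair k).2 j * v (mxvec_index (unpair k).1 j) 0.
Proof.
rewrite mxE (reindex _ (curry_mxvec_bij m n)) /=.
rewrite (eq_bigr (fun p => (kron 1%:M U) k (mxvec_index p.1 p.2) * v (mxvec_index p.1 p.2) 0)); last by move=> [].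
rewrite -(pair_big xpredT xpredT (fun i j => (kron 1%:M U) k (mxvec_index i j) * v (mxvec_index i j) 0)) /=.
under eq_bigr do under eq_bigr do rewrite mxE unpairK /= mxE -mulrA.
under eq_bigr do rewrite -big_distrr /=.
by rewrite sum_delta.
Qed.

End Main.
Local Open Scope nat_scope.
Definition flipn (j : nat) := if odd j then j.-1 else j.+1.
Lemma oddm j b : odd j = b -> j %% 2 = b.
Proof. by rewrite modn2 => ->. Qed.
Lemma flipn_odd j : odd (flipn j) = ~~ odd j.
Proof.
rewrite /flipn; case oj: (odd j) => /=; last by rewrite oj.
by case: j oj => //= j; case: (odd j).
Qed.
Lemma flipnK j : flipn (flipn j) = j.
Proof.
have := flipn_odd j; rewrite /flipn; case oj: (odd j) => /= ->; last by [].
by case: j oj.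
Qed.
Lemma flipn_div2 j : flipn j %/ 2 = j %/ 2.
Proof. rewrite /flipn; case: ifP => /oddm oj /=; lia. Qed.
Lemma flip_lt M (j : 'I_(2 ^ M.+1)) : flipn j < 2 ^ M.+1.
Proof.
have hj := ltn_ord j; have h2 : odd (2 ^ M.+1) = false by rewrite oddX.
move: (oddm h2) hj; rewrite /flipn; case: ifP => /oddm oj; lia.
Qed.
Definition flip M (j : 'I_(2 ^ M.+1)) : 'I_(2 ^ M.+1) := Ordinal (@flip_lt M j).
Lemma flipK M (j : 'I_(2 ^ M.+1)) : flip (flip j) = j.
Proof. by apply/val_inj; rewrite /= flipnK. Qed.

Local Open Scope ring_scope.
Lemma qparity_flip M (j : 'I_(2 ^ M.+1)) : qparity (flip j) = ~~ qparity j.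
Proof.
rewrite /qparity !big_ord_recl !expn0 !divn1 /= flipn_odd !oddD !oddb addNb.
do 3 f_equal; apply: eq_bigr => b _.
by rewrite /bump /= add1n (expnS 2 b) !divnMA flipn_div2.
Qed.

Lemma qparity0 (j : 'I_(2 ^ 0)) : qparity j = false.
Proof. by rewrite /qparity big_ord0. Qed.


Section Core.
Variable C : numClosedFieldType.

Lemma gram_sel n r (T : {set 'I_n}) (A : 'M[C]_(r,n)) :
  (A *m (sel C T)^t*) *m (A *m (sel C T)^t*)^t* =
  \matrix_(i, i') \sum_j ((j \in T)%:R * (A i j * (A i' j)^*)).
Proof.
rewrite tcM trmxCK mulmxA -(mulmxA A) selP; apply/matrixP => i i'; rewrite !mxE.
apply: eq_bigr => k _; rewrite !mxE (bigD1 k) //= big1 ?addr0; last first.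
  by move=> j /negbTE jk; rewrite mxE jk mulr0.
by rewrite mxE eqxx /= mulrCA mulrA.
Qed.

Definition parmx L M (A : 'M[C]_(2 ^ L, 2 ^ M)) p :=
  forall i j, A i j != 0 -> qparity i (+) qparity j = p.

Lemma gram_parb L M (A : 'M[C]_(2 ^ L, 2 ^ M)) p b : parmx A p ->
  \matrix_(i, i') \sum_j ((qparity j == b)%:R * (A i j * (A i' j)^*)) =
  \matrix_(i, i') (((qparity i == p (+) b) && (qparity i' == p (+) b))%:R * (A *m A^t*) i i').
Proof.
move=> H; apply/matrixP => i i'; rewrite !mxE big_distrr /=; apply: eq_bigr => j _; rewrite !mxE.
have [->|nz] := eqVneq (A i j) 0; first by rewrite !mul0r !mulr0.
have [->|nz'] := eqVneq (A i' j) 0; first by rewrite conjC0 !mulr0.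
have h1 := H _ _ nz; have h2 := H _ _ nz'.
rewrite -h1 in h2 *; congr (_%:R * _).
by case: (qparity i) (qparity i') (qparity j) b h2 => [] [] [] [].
Qed.

Lemma same_case L M (A B : 'M[C]_(2 ^ L, 2 ^ M)) p :
  A *m A^t* = B *m B^t* -> parmx A p -> parmx B p ->
  exists W : 'M[C]_(2 ^ M), [/\ W \is unitarymx, A *m W = B &
     forall i j, W i j != 0 -> qparity i = qparity j].
Proof.
move=> AB pA pB.
pose T := [set j : 'I_(2 ^ M) | qparity j == false].
have E : forall (X : 'M[C]_(2 ^ L, 2 ^ M)),
  \matrix_(i, i') \sum_j ((j \in T)%:R * (X i j * (X i' j)^*)) =
  \matrix_(i, i') \sum_j ((qparity j == false)%:R * (X i j * (X i' j)^*)).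
  by move=> X; apply/matrixP => i i'; rewrite !mxE; apply: eq_bigr => j _; rewrite inE.
have E' : forall (X : 'M[C]_(2 ^ L, 2 ^ M)),
  \matrix_(i, i') \sum_j ((j \in ~: T)%:R * (X i j * (X i' j)^*)) =
  \matrix_(i, i') \sum_j ((qparity j == true)%:R * (X i j * (X i' j)^*)).
  by move=> X; apply/matrixP => i i'; rewrite !mxE; apply: eq_bigr => j _; rewrite !inE; case: (qparity j).
have := @KLS C _ T _ A B; rewrite !gram_sel !E !E' !(gram_parb _ pA) !(gram_parb _ pB) AB.
move=> /(_ erefl erefl) [W [Wu AW Wp]].
exists W; split => // i j /Wp; rewrite !inE.
by case: (qparity i); case: (qparity j).
Qed.


Definition Jmx M : 'M[C]_(2 ^ M.+1) := \matrix_(k, j) (k == flip j)%:R.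

Lemma mulJ r M (B : 'M[C]_(r, 2 ^ M.+1)) i j : (B *m Jmx M) i j = B i (flip j).
Proof. by rewrite mxE; under eq_bigr do rewrite mxE mulrC eq_sym; rewrite sum_delta. Qed.

Lemma J_unitary M : Jmx M \is unitarymx.
Proof.
apply/unitarymxP/matrixP => a b; rewrite !mxE.
under eq_bigr do rewrite !mxE rmorph_nat eq_sym (can2_eq (@flipK M) (@flipK M)).
under eq_bigr => i _ do rewrite [i == _]eq_sym.
by rewrite sum_delta flipK eq_sym.
Qed.

Lemma flip_case L M (A B : 'M[C]_(2 ^ L, 2 ^ M.+1)) p :
  A *m A^t* = B *m B^t* -> parmx A p -> parmx B (~~ p) ->
  exists W : 'M[C]_(2 ^ M.+1), [/\ W \is unitarymx, A *m W = B &
     forall i j, W i j != 0 -> qparity i = ~~ qparity j].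
Proof.
move=> AB pA pB.
have pB' : parmx (B *m Jmx M) p.
  move=> i j; rewrite mulJ => /pB; rewrite qparity_flip.
  by move=> h; rewrite -[p]negbK -h addbN negbK.
have AB' : A *m A^t* = (B *m Jmx M) *m (B *m Jmx M)^t*.
  by rewrite tcM mulmxA mulmxtVK ?J_unitary.
have [W [Wu AW Wp]] := same_case AB' pA pB'.
exists (W *m Jmx M); split.
- by rewrite mul_unitarymx ?J_unitary.
- by rewrite mulmxA AW; apply/matrixP => i j; rewrite !mulJ flipK.
by move=> i j; rewrite mulJ => /Wp ->; rewrite qparity_flip.
Qed.

Lemma get_W L M (A B : 'M[C]_(2 ^ L, 2 ^ M)) p p' :
  A *m A^t* = B *m B^t* -> parmx A p -> parmx B p' ->
  exists W : 'M[C]_(2 ^ M), exists f : bool, [/\ W \is unitarymx, A *m W = B &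
     forall i j, W i j != 0 -> qparity i = qparity j (+) f].
Proof.
case: M A B => [|M] A B AB pA pB.
  have [W [Wu AW]] := KL AB.
  by exists W, false; split => // i j _; rewrite !qparity0.
have [e|pp'] := eqVneq p p'.
  rewrite -e in pB.
  have [W [Wu AW Wp]] := same_case AB pA pB.
  by exists W, false; split => // i j /Wp ->; rewrite addbF.
have e : p' = ~~ p by move: pp'; case: (p); case: (p').
have pB' : parmx B (~~ p) by rewrite -e.
have [W [Wu AW Wp]] := flip_case AB pA pB'.
by exists W, true; split => // i j /Wp ->; rewrite addbT.
Qed.

Lemma sum_nz (I : finType) (F : I -> C) : \sum_i F i != 0 -> exists i, F i != 0.
Proof.
move=> H; case: (boolP [exists i, F i != 0]) => [/existsP //|].
rewrite negb_exists => /forallP h; move: H; rewrite big1 ?eqxx // => i _.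
by apply/eqP; have := h i; rewrite negbK.
Qed.

End Core.

Theorem lemma2 (C : numClosedFieldType) (L M : nat)
    (rho : 'M[C]_(2 ^ L)) (Psi Phi : 'M[C]_(2 ^ L * 2 ^ M)) :
  is_state rho ->
  is_pure_state Psi -> is_pure_state Phi ->
  ptrace2 Psi = rho -> ptrace2 Phi = rho ->
  definite_parity (@cparity L M) Psi -> definite_parity (@cparity L M) Phi ->
  exists U : 'M[C]_(2 ^ M),
    U \is unitarymx /\
    (forall sigma : 'M[C]_(2 ^ M), is_state sigma ->
       definite_parity (@qparity M) sigma ->
       definite_parity (@qparity M) (uchan U sigma)) /\
    uchan (kron 1%:M U) Psi = Phi.
Proof.
move=> _ [psi [psiN ->]] [phi [phiN ->]] tPsi tPhi dPsi dPhi.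
have AB : vmx psi *m (vmx psi)^t* = vmx phi *m (vmx phi)^t*.
  by rewrite -!ptrace_pure tPsi tPhi.
have [p Hp] := pure_par psiN dPsi.
have [p' Hp'] := pure_par phiN dPhi.
have pA : parmx (vmx psi) p.
  by move=> i j; rewrite mxE => /Hp; rewrite /cparity unpairK.
have pB : parmx (vmx phi) p'.
  by move=> i j; rewrite mxE => /Hp'; rewrite /cparity unpairK.
have [W [f [Wu AW Wp]]] := get_W AB pA pB.
exists W^T; split; first by rewrite trmx_unitary.
split.
  move=> sigma _ /dpP Hs; apply/dpP => a b; rewrite /uchan mxE.
  move=> /sum_nz [k]; rewrite mulf_eq0 negb_or => /andP[h1 h2].
  move: h1; rewrite mxE => /sum_nz [l]; rewrite mulf_eq0 negb_or => /andP[h3 h4].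
  move: h2 h3; rewrite !mxE conjC_eq0 => h2 h3.
  have e1 := Wp _ _ h3; have e2 := Hs _ _ h4; have e3 := Wp _ _ h2.
  move: e1 e2 e3; case: (qparity a) (qparity b) (qparity l) (qparity k) (f) => [] [] [] [] [] //=.
have Kpsi : kron 1%:M W^T *m psi = phi.
  apply/matrixP => k t; rewrite ord1 kron_apply.
  have := congr1 (fun X : 'M[C]_(2 ^ L, 2 ^ M) => X (unpair k).1 (unpair k).2) AW; rewrite /= !mxE unpairK2 => <-.
  by apply: eq_bigr => j _; rewrite !mxE mulrC.
by rewrite /uchan mulmxA Kpsi -mulmxA -tcM Kpsi.
Qed.
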